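(* Let $(B,\lfloor\cdot,\cdot\rfloor)$ be an SSD space with quadratic form $q$ and let $A\subset B$ be $q$-positive. If $\Phi_A(b)\ge q(b)$ for all $b\in\operatorname{conv}^w A$, then $G_{\Phi_A}=\mathcal{P}_q(\Phi_A^{@})$.
   Context: An SSD space is a pair $(B,\lfloor\cdot,\cdot\rfloor)$ with $B$ a nonzero real vector space and $\lfloor\cdot,\cdot\rfloor$ a symmetric bilinear form; $q(b)=\frac12\lfloor b,b\rfloor$. $w(B,B)$ is the coarsest topology on $B$ making all maps $b\mapsto\lfloor b,c\rfloor$ continuous; $\operatorname{conv}^w A$ is the $w(B,B)$-closure of the convex hull of $A$. A nonempty $A\subset B$ is $q$-positive if $q(b-c)\ge0$ for all $b,c\in A$. $\Phi_A(x)=\sup_{a\in A}\{\lfloor x,a\rfloor-q(a)\}$. For proper convex $f$, $f^{@}(b)=\sup_{c\in B}\{\lfloor c,b\rfloor-f(c)\}$, $\mathcal{P}_q(f)=\{b: f(b)=q(b)\}$, $G_f=\{b: f(b)+f^{@}(b)=\lfloor b,b\rfloor\}$. *)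

(* Defs.v *)
From mathcomp Require Import all_boot all_order all_algebra.
From mathcomp Require Import boolp classical_sets reals constructive_ereal ereal.
Set Implicit Arguments. Unset Strict Implicit. Unset Printing Implicit Defensive.
Import Order.TTheory GRing.Theory Num.Theory.
Local Open Scope ring_scope.
Local Open Scope classical_set_scope.

(* (B, bf) is an SSD space: B a nonzero real vector space, bf symmetric bilinear
   (linearity in the first argument + symmetry gives bilinearity). *)
Definition SSD_space (R : realType) (B : lmodType R) (bf : B -> B -> R) : Prop :=
  [/\ (forall b c, bf b c = bf c b),
      (forall (r s : R) (a b c : B), bf (r *: a + s *: b) c = r * bf a c + s * bf b c)
    & exists b : B, b != 0].

Definition qf (R : realType) (B : lmodType R) (bf : B -> B -> R) (b : B) : R :=
  bf b b / 2.

Definition q_positive (R : realType) (B : lmodType R) (bf : B -> B -> R)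
  (A : set B) : Prop :=
  A !=set0 /\ forall b c, A b -> A c -> 0 <= qf bf (b - c).

Definition PhiA (R : realType) (B : lmodType R) (bf : B -> B -> R)
  (A : set B) (x : B) : \bar R :=
  ereal_sup [set ((bf x a - qf bf a)%:E)%E | a in A].

Definition fenchel_at (R : realType) (B : lmodType R) (bf : B -> B -> R)
  (f : B -> \bar R) (b : B) : \bar R :=
  ereal_sup [set ((bf c b)%:E - f c)%E | c in [set: B]].

Definition Pq (R : realType) (B : lmodType R) (bf : B -> B -> R)
  (f : B -> \bar R) : set B :=
  [set b | f b = (qf bf b)%:E].

Definition Gf (R : realType) (B : lmodType R) (bf : B -> B -> R)
  (f : B -> \bar R) : set B :=
  [set b | (f b + fenchel_at bf f b)%E = (bf b b)%:E].

Definition conv_hull (R : realType) (B : lmodType R) (A : set B) : set B :=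
  [set x | exists n (w : 'I_n -> R) (a : 'I_n -> B),
     [/\ (forall i, 0 <= w i), \sum_(i < n) w i = 1, (forall i, A (a i))
       & x = \sum_(i < n) w i *: a i]].

(* closure in w(B,B), the coarsest topology making all b |-> [b,c] continuous:
   x is in the closure of S iff every basic neighbourhood
   {y : |[y - x, c_i]| < e, i = 1..k} meets S. *)
Definition wclosure (R : realType) (B : lmodType R) (bf : B -> B -> R)
  (S : set B) : set B :=
  [set x | forall (cs : seq B) (e : R), 0 < e ->
     exists2 s, S s & forall c, c \in cs -> `|bf (s - x) c| < e].

Definition convw (R : realType) (B : lmodType R) (bf : B -> B -> R)
  (A : set B) : set B :=
  wclosure bf (conv_hull A).

(* Main.v *)
Require Import Defs.
From mathcomp Require Import all_boot all_order all_algebra.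
From mathcomp Require Import boolp classical_sets reals constructive_ereal ereal.
From mathcomp Require Import all_classical all_reals all_analysis.
From mathcomp Require Import ring lra.
Import Order.TTheory GRing.Theory Num.Theory.
Import numFieldNormedType.Exports.
Local Open Scope ring_scope.
Local Open Scope classical_set_scope.
Section Lim.
Variable R : realType.

Lemma sq_lt_norm (x e : R) : 0 < e -> x ^+ 2 < e ^+ 2 -> `|x| < e.
Proof.
move=> e0 h; rewrite -(@ltr_pXn2r _ 2%N) ?nnegrE ?normr_ge0 ?ltW //.
by rewrite real_normK ?num_real.
Qed.

Lemma archi_inv (eps : R) : 0 < eps -> exists N : nat, N.+1%:R^-1 < eps.
Proof.
move=> e0; have h : 0 <= eps^-1 by rewrite invr_ge0 ltW.
exists (Num.Def.archi_bound eps^-1).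
have := archi_boundP h => lt.
rewrite invf_plt ?posrE ?ltr0Sn //.
by apply: (lt_trans lt); rewrite ltr_nat.
Qed.

Lemma cauchy_seq_cvg (x : nat -> R) :
  (forall n p, (n <= p)%N -> (x n - x p) ^+ 2 <= 4 / n.+1%:R) -> cvg (x @ \oo).
Proof.
move=> hx; apply: (@cauchy_cvg R); apply: cauchy_exP => eps eps0.
have [N hN] := @archi_inv _ (divr_gt0 (exprn_gt0 2 eps0) (ltr0Sn R 3)).
exists (x N); rewrite /=; apply: filterS (nbhs_infty_ge N) => n Nn /=.
rewrite -ball_normE /=; apply: sq_lt_norm => //.
apply: (le_lt_trans (hx _ _ Nn)).
rewrite -ltr_pdivlMl ?ltr0Sn // mulrC.
by rewrite (_ : (4 : R) = 3.+1%:R) // ?mulr_natr.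
Qed.


Lemma lim_sum_sq k (x : 'I_k -> nat -> R) (Y : 'I_k -> R) (al : R) (be : 'I_k -> R) :
  (forall j, x j n @[n --> \oo] --> Y j) ->
  (\sum_(j < k) (al * x j n + be j) ^+ 2) @[n --> \oo] -->
    \sum_(j < k) (al * Y j + be j) ^+ 2.
Proof.
move=> hx; apply: cvg_big; first exact: add_continuous.
move=> j _; rewrite expr2.
under eq_cvg do rewrite expr2.
have h : (al * x j n + be j) @[n --> \oo] --> al * Y j + be j.
  apply: cvgD; last exact: cvg_cst.
  exact: cvgMl_tmp.
exact: cvgM.
Qed.
End Lim.
Arguments sq_lt_norm {R}.
Arguments archi_inv {R}.
Arguments cauchy_seq_cvg {R}.
Arguments lim_sum_sq {R k x Y}.


Section Basic.
Variables (R : realType) (B : lmodType R) (bf : B -> B -> R).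
Hypothesis bfC : forall b c, bf b c = bf c b.
Hypothesis bfL : forall (r s : R) (a b c : B), bf (r *: a + s *: b) c = r * bf a c + s * bf b c.

Lemma bfD x y c : bf (x + y) c = bf x c + bf y c.
Proof. by have := bfL 1 1 x y c; rewrite !scale1r !mul1r. Qed.
Lemma bfZ r x c : bf (r *: x) c = r * bf x c.
Proof. by have := bfL r 0 x x c; rewrite scale0r addr0 mul0r addr0. Qed.
Lemma bf0 c : bf 0 c = 0.
Proof. by have := bfZ 0 0 c; rewrite scale0r mul0r. Qed.
Lemma bfN x c : bf (- x) c = - bf x c.
Proof. by rewrite -scaleN1r bfZ mulN1r. Qed.
Lemma bfB x y c : bf (x - y) c = bf x c - bf y c.
Proof. by rewrite bfD bfN. Qed.
Lemma bfDr x y c : bf c (x + y) = bf c x + bf c y.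
Proof. by rewrite !(bfC c) bfD. Qed.
Lemma bfZr r x c : bf c (r *: x) = r * bf c x.
Proof. by rewrite !(bfC c) bfZ. Qed.
Lemma bfNr x c : bf c (- x) = - bf c x.
Proof. by rewrite !(bfC c) bfN. Qed.
Lemma bfBr x y c : bf c (x - y) = bf c x - bf c y.
Proof. by rewrite !(bfC c) bfB. Qed.
Lemma bf_sumr x k (l : 'I_k -> R) (cc : 'I_k -> B) :
  bf x (\sum_(j < k) l j *: cc j) = \sum_(j < k) l j * bf x (cc j).
Proof.
elim: k l cc => [|k IH] l cc; first by rewrite !big_ord0 (bfC x) bf0.
by rewrite !big_ord_recr /= bfDr IH bfZr.
Qed.

Lemma qfB x y : qf bf (x - y) = qf bf x - bf x y + qf bf y.
Proof.
rewrite /qf bfB !bfBr (bfC y x).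
by rewrite !mulrBl; field.
Qed.

Lemma conv_mem (A : set B) a : A a -> conv_hull A a.
Proof.
move=> Aa; exists 1%N, (fun _ => 1), (fun _ => a); split.
- by move=> _; exact: ler01.
- by rewrite big_ord1.
- by [].
- by rewrite big_ord1 scale1r.
Qed.

Lemma conv_convex (A : set B) x y t : conv_hull A x -> conv_hull A y ->
  0 <= t <= 1 -> conv_hull A ((1 - t) *: x + t *: y).
Proof.
move=> [n1 [w1 [a1 [w1p w1s a1A ->]]]] [n2 [w2 [a2 [w2p w2s a2A ->]]]] /andP[t0 t1].
exists (n1 + n2)%N,
  (fun i => match fintype.split i with inl i1 => (1 - t) * w1 i1 | inr i2 => t * w2 i2 end),
  (fun i => match fintype.split i with inl i1 => a1 i1 | inr i2 => a2 i2 end).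
have E1 : forall i : 'I_n1, fintype.split (lshift n2 i) = inl i := fun i => unsplitK (inl i).
have E2 : forall i : 'I_n2, fintype.split (rshift n1 i) = inr i := fun i => unsplitK (inr i).
split.
- move=> i; case: (fintype.split i) => j; apply: mulr_ge0 => //; by rewrite subr_ge0.
- rewrite big_split_ord /=.
  under eq_bigr do rewrite E1.
  under [X in _ + X]eq_bigr do rewrite E2.
  by rewrite -!mulr_sumr w1s w2s !mulr1 subrK.
- by move=> i; case: (fintype.split i).
- rewrite big_split_ord /=.
  under [X in _ = X + _]eq_bigr do rewrite E1.
  under [X in _ = _ + X]eq_bigr do rewrite E2.
  by rewrite !scaler_sumr; congr (_ + _); apply: eq_bigr => i _; rewrite scalerA.
Qed.

Lemma quad_nonneg (P Q : R) : 0 <= Q ->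
  (forall t, 0 < t <= 1 -> 0 <= 2 * t * P + t ^+ 2 * Q) -> 0 <= P.
Proof.
move=> Q0 h; rewrite leNgt; apply/negP => P0.
pose t := - P / (Q + 1 - P).
have den : 0 < Q + 1 - P by lra.
have t0 : 0 < t by rewrite /t divr_gt0 // oppr_gt0.
have t1 : t <= 1 by rewrite /t ler_pdivrMr // mul1r; lra.
have tQ : t * Q <= - P.
  rewrite /t mulrAC ler_pdivrMr //; nra.
have := h t; rewrite t0 t1 => /(_ isT) H0.
nra.
Qed.

Section Sep.
Variables (A : set B) (b : B).
Hypothesis H : forall d eta, 0 < eta -> exists2 a, A a & - eta < bf (a - b) d.

Lemma sep : wclosure bf (conv_hull A) b.
Proof.
move=> cs e e0.
pose k := size cs.
pose c (j : 'I_k) := nth 0 cs j.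
pose N x := \sum_(j < k) bf x (c j) ^+ 2.
have N_ge0 x : 0 <= N x by apply: sumr_ge0 => j _; exact: sqr_ge0.
have N_ge x j : bf x (c j) ^+ 2 <= N x.
  by rewrite /N (bigD1 j) //= lerDl sumr_ge0 // => i _; exact: sqr_ge0.
suff [s Cs Ns] : exists2 s, conv_hull A s & N (s - b) < e ^+ 2.
  exists s => // c0 c0cs.
  have ik : (index c0 cs < k)%N by rewrite index_mem.
  have -> : c0 = c (Ordinal ik) by rewrite /c /= nth_index.
  apply: sq_lt_norm => //; exact: le_lt_trans (N_ge _ _) Ns.
have [a0 Aa0 _] := H 0 1 ltr01.
pose V := [set N (s - b) | s in conv_hull A].
have V0 : V !=set0 by exists (N (a0 - b)); exists a0 => //; exact: conv_mem.
have Vlb : has_lbound V by exists 0 => _ [s _ <-]; exact: N_ge0.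
have hinf : has_inf V by split.
pose m := inf V.
have mlb s : conv_hull A s -> m <= N (s - b).
  by move=> Cs; apply: ge_inf => //; exists s.
case: (ltP m (e ^+ 2)) => [lt|ge].
  by have [_ [s Cs <-] lt'] := inf_lt V0 lt; exists s.
exfalso.
have m0 : 0 < m by apply: lt_le_trans ge; exact: exprn_gt0.
have : forall n : nat, exists s, conv_hull A s /\ N (s - b) < m + n.+1%:R^-1.
  move=> n; have ipos : 0 < n.+1%:R^-1 :> R by rewrite invr_gt0 ltr0Sn.
  by have [_ [s Cs <-] h] := inf_adherent ipos hinf; exists s.
move=> /choice [sq hsq].
pose x j n := bf (sq n - b) (c j).
have cauchyx j n p : (n <= p)%N -> (x j n - x j p) ^+ 2 <= 4 / n.+1%:R.
  move=> np.
  have Cmid : conv_hull A ((1 - 2^-1) *: sq n + 2^-1 *: sq p).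
    apply: conv_convex; [exact: (hsq n).1 | exact: (hsq p).1 |].
    by rewrite invr_ge0 invf_le1 ?ler0n ?ler1n.
  have hm := mlb _ Cmid.
  have iden : N (sq n - sq p) + 4 * N (((1 - 2^-1) *: sq n + 2^-1 *: sq p) - b)
      = 2 * N (sq n - b) + 2 * N (sq p - b).
    rewrite /N !mulr_sumr -!big_split /=; apply: eq_bigr => i _.
    by rewrite !bfB bfL; field.
  have hxj : x j n - x j p = bf (sq n - sq p) (c j) by rewrite /x !bfB; ring.
  have hle := N_ge (sq n - sq p) j.
  have hn := (hsq n).2; have hp := (hsq p).2.
  have ip : p.+1%:R^-1 <= n.+1%:R^-1 :> R.
    by rewrite lef_pV2 ?posrE ?ltr0Sn // ler_nat ltnS.
  rewrite hxj; move: hle hm hn hp ip iden; rewrite /m.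
  set I1 := n.+1%:R^-1; set I2 := p.+1%:R^-1.
  lra.
pose Y j := lim (x j n @[n --> \oo]).
have cvgx j : x j n @[n --> \oo] --> Y j by exact: cauchy_seq_cvg (cauchyx j).
have Lt a t : A a -> 0 <= t <= 1 ->
    m <= \sum_(j < k) ((1 - t) * Y j + t * bf (a - b) (c j)) ^+ 2.
  move=> Aa t01.
  have cv := lim_sum_sq (1 - t) (fun j => t * bf (a - b) (c j)) cvgx.
  apply: (cvgr_to_ge cv); apply: nearW => n.
  have := mlb _ (@conv_convex A _ _ t (hsq n).1 (@conv_mem A a Aa) t01).
  suff -> : N ((1 - t) *: sq n + t *: a - b) =
     \sum_(j < k) ((1 - t) * x j n + t * bf (a - b) (c j)) ^+ 2 by [].
  by apply: eq_bigr => j _; rewrite /x !bfB bfL; ring.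
have LY : \sum_(j < k) Y j ^+ 2 <= m.
  have cv := lim_sum_sq 1 (fun j => 0) cvgx.
  have e1 : \sum_(j < k) (1 * Y j + 0) ^+ 2 = \sum_(j < k) Y j ^+ 2.
    by apply: eq_bigr => j _; rewrite mul1r addr0.
  rewrite -e1; apply/ler_addgt0Pr => eps eps0.
  have [N0 hN0] := archi_inv _ eps0.
  apply: (cvgr_to_le cv); apply: filterS (nbhs_infty_ge N0) => n hn.
  have e2 : \sum_(j < k) (1 * x j n + 0) ^+ 2 = N (sq n - b).
    by apply: eq_bigr => j _; rewrite mul1r addr0.
  rewrite e2; apply: ltW; apply: (lt_le_trans (hsq n).2); rewrite lerD2l.
  apply: ltW; apply: le_lt_trans hN0.
  by rewrite lef_pV2 ?posrE ?ltr0Sn // ler_nat ltnS.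
have key a : A a -> m <= \sum_(j < k) Y j * bf (a - b) (c j).
  move=> Aa.
  pose u j := bf (a - b) (c j).
  have iden t : \sum_(j < k) ((1 - t) * Y j + t * u j) ^+ 2 =
     \sum_(j < k) Y j ^+ 2 + 2 * t * (\sum_(j < k) Y j * (u j - Y j))
       + t ^+ 2 * \sum_(j < k) (u j - Y j) ^+ 2.
    rewrite !mulr_sumr -!big_split /=; apply: eq_bigr => j _; ring.
  have Q0 : 0 <= \sum_(j < k) (u j - Y j) ^+ 2.
    by apply: sumr_ge0 => j _; exact: sqr_ge0.
  have P0 : 0 <= \sum_(j < k) Y j * (u j - Y j).
    apply: (quad_nonneg _ _ Q0) => t /andP[t0 t1].
    have := Lt a t Aa; rewrite (ltW t0) t1 => /(_ isT).
    rewrite -/u iden; lra.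
  have m1 : m <= \sum_(j < k) Y j ^+ 2.
    have := Lt a 0 Aa; rewrite lexx ler01 => /(_ isT).
    rewrite -/u iden; lra.
  have -> : \sum_(j < k) Y j * bf (a - b) (c j) =
     \sum_(j < k) Y j * (u j - Y j) + \sum_(j < k) Y j ^+ 2.
    by rewrite -big_split /=; apply: eq_bigr => j _; rewrite /u; ring.
  lra.
have m2 : 0 < m / 2 by rewrite divr_gt0.
have [a Aa lt] := H (\sum_(j < k) (- Y j) *: c j) _ m2.
move: lt; rewrite bf_sumr.
under eq_bigr do rewrite mulNr.
rewrite sumrN; have := key a Aa; lra.
Qed.
End Sep.

Section Phi.
Variables (A : set B) (a0 : B).
Hypothesis Aa0 : A a0.
Hypothesis qpos : forall b c, A b -> A c -> 0 <= qf bf (b - c).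

Lemma PhiA_lb x a : A a -> ((bf x a - qf bf a)%:E <= PhiA bf A x)%E.
Proof. by move=> Aa; apply: ereal_sup_ubound; exists a. Qed.

Lemma PhiA_A a : A a -> PhiA bf A a = (qf bf a)%:E.
Proof.
move=> Aa; apply/eqP; rewrite eq_le; apply/andP; split.
- apply: ge_ereal_sup => _ [a' Aa' <-]; rewrite lee_fin.
  have := qpos _ _ Aa Aa'; rewrite qfB; lra.
- apply: (le_trans _ (PhiA_lb a a Aa)); rewrite lee_fin /qf; lra.
Qed.

Lemma Fen x c : ((bf c x)%:E - PhiA bf A c <= fenchel_at bf (PhiA bf A) x)%E.
Proof. by apply: ereal_sup_ubound; exists c. Qed.

Lemma PhiA_le_fen x : (PhiA bf A x <= fenchel_at bf (PhiA bf A) x)%E.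
Proof.
apply: ge_ereal_sup => _ [a Aa <-].
by have := Fen x a; rewrite PhiA_A // -EFinB (bfC a x).
Qed.

Lemma main_sec :
  (forall b, convw bf A b -> ((qf bf b)%:E <= PhiA bf A b)%E) ->
  Gf bf (PhiA bf A) = Pq bf (fenchel_at bf (PhiA bf A)).
Proof.
move=> hyp; apply/seteqP; split => b; rewrite /Gf /Pq /=.
- move=> hG; move: hG (PhiA_lb b a0 Aa0) (PhiA_le_fen b).
  case Ef: (PhiA bf A b) => [F| |]; case Eg: (fenchel_at bf (PhiA bf A) b) => [G| |] //=.
  move=> hG _ hFG; rewrite lee_fin in hFG; rewrite -EFinD in hG; case: hG => hG.
  have hF : qf bf b <= F.
    have := hyp b; rewrite /convw Ef lee_fin; apply.
    apply: sep => d eta eta0.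
    have h1 := Fen b (b + d); rewrite Eg in h1.
    have h2 : ((F + bf d b - eta)%:E < PhiA bf A (b + d))%E.
      move: h1; case: (PhiA bf A (b + d)) => [Fd| |] //=.
        rewrite -EFinB !lee_fin lte_fin bfD => h1; lra.
      by move=> _; exact: ltry.
    have [_ [a Aa <-] lt] := ereal_sup_gt h2.
    exists a => //; rewrite lte_fin in lt.
    have := PhiA_lb b a Aa; rewrite Ef lee_fin => h3.
    rewrite bfD in lt; rewrite bfB (bfC a d) (bfC b d); lra.
  congr (_%:E); rewrite /qf in hF *; lra.
- move=> hP; move: (PhiA_lb b a0 Aa0) (PhiA_le_fen b) (Fen b b); rewrite hP.
  case Ef: (PhiA bf A b) => [F| |] //=.
  move=> _ h1 h2; rewrite -EFinD in h2; rewrite lee_fin in h1; rewrite lee_fin in h2.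
  rewrite -EFinD; congr (_%:E); rewrite /qf in h1 h2 *; lra.
Qed.
End Phi.

End Basic.

Theorem mainTheorem11 (R : realType) (B : lmodType R) (bf : B -> B -> R)
  (A : set B) :
  SSD_space bf -> q_positive bf A ->
  (forall b, convw bf A b -> ((qf bf b)%:E <= PhiA bf A b)%E) ->
  Gf bf (PhiA bf A) = Pq bf (fenchel_at bf (PhiA bf A)).
Proof.
move=> [bfC bfL _] [[a0 Aa0] qpos] hyp.
exact: (main_sec _ _ _ bfC bfL _ _ Aa0 qpos hyp).
Qed.
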